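(* Almost surely, for all $1\le k\le\kappa$, $\mathbf w(e_k)\le\frac{2}{k+2}$. In particular $\kappa\le\frac{2n}{\ln n}$.
   Context: Configuration model: $(d_i^-)_{1\le i\le n}$, $(d_i^+)_{1\le i\le n}$ positive integers with $\sum_id_i^-=\sum_id_i^+=m$; each vertex $i\in V=\{1,\dots,n\}$ carries a set $E_i^+$ of $d_i^+$ tails and a set $E_i^-$ of $d_i^-$ heads; $\omega$ is a uniformly random bijection from tails to heads, $\omega(e)=f$ being an arc from the vertex of $e$ to that of $f$. Assume $\min_i\min(d_i^+,d_i^-)\ge2$; $\Delta:=\max_i\max(d_i^+,d_i^-)$, $h=\lfloor\frac{\ln n}{10\ln\Delta}\rfloor$, $t$ a positive integer, $w_{\min}=\frac{\ln n}{n}$. Exploration from a root $i\in V$: initially $\mathcal T=\{i\}$ and all tails/heads unmatched; $\partial_+\mathcal T$ ($\partial_-\mathcal T$) is the set of unmatched tails (heads) whose vertex lies in $\mathcal T$. For $e\in\partial_+\mathcal T$, the height $\mathbf h(e)$ is the number of vertices on the unique directed path in $\mathcal T$ from $i$ to the vertex of $e$ (including it), and the weight $\mathbf w(e)$ is the inverse product of the out-degrees of those vertices. Iterate: select, among $e\in\partial_+\mathcal T$ with $\mathbf h(e)<t-h$ and $\mathbf w(e)>w_{\min}$, one of maximal weight (ties broken by a fixed deterministic order); match it to a uniformly chosen unmatched head $f$; if $f\notin\partial_-\mathcal T$, add arc $ef$ and the vertex of $f$ to $\mathcal T$. Stop when no such tail exists; $\kappa$ is the total number of pairings, and $e_k$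 is the tail selected at step $k$ (with $\mathbf w(e_k)$ its weight when selected). *)

(* Defs.v *)
From HB Require Import structures.
From mathcomp Require Import all_boot all_order all_algebra.
From mathcomp Require Import fingroup perm.
From mathcomp Require Import reals exp.

Set Implicit Arguments.
Unset Strict Implicit.
Unset Printing Implicit Defensive.

Import Order.TTheory GRing.Theory Num.Theory.
Local Open Scope ring_scope.

(* Configuration model with n vertices and m half-edges of each kind.
   Tails and heads are both indexed by 'I_m; tv e (resp. hv f) is the vertex
   carrying tail e (resp. head f), so E_i^+ = tv^-1(i), E_i^- = hv^-1(i).
   A configuration omega is a bijection tails -> heads, i.e. a {perm 'I_m}. *)

Section Exploration.
Variable R : realType.
Variables n m : nat.
Variables (tv hv : 'I_m -> 'I_n).
Variable rk : {perm 'I_m}.     (* fixed deterministic tie-breaking order on tails *)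
Variable t : nat.
Variable root : 'I_n.
Variable omega : {perm 'I_m}.

Definition dout (i : 'I_n) : nat := #|[set e | tv e == i]|.
Definition din (i : 'I_n) : nat := #|[set f | hv f == i]|.
Definition Delta : nat := \max_(i : 'I_n) maxn (dout i) (din i).
Definition hpar : int :=
  Num.floor (ln (n%:R : R) / (10 * ln (Delta%:R : R))).
Definition wmin : R := ln (n%:R : R) / n%:R.

(* State of the exploration: tree vertex set, set of already paired tails,
   and for each tree vertex v the number of vertices on the tree path from
   the root to v (its height) and the product of out-degrees along it. *)
Record state := State {
  tree : {set 'I_n};
  matched : {set 'I_m};
  hgt : 'I_n -> nat;
  prd : 'I_n -> nat }.

Definition init : state :=
  State [set root] set0 (fun _ => 1%N) (fun _ => dout root).

Definition bdry_out (s : state) : {set 'I_m} :=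
  [set e | (e \notin matched s) && (tv e \in tree s)].
Definition bdry_in (s : state) : {set 'I_m} :=
  [set f | (f \notin [set omega e | e in matched s]) && (hv f \in tree s)].

Definition height (s : state) (e : 'I_m) : nat := hgt s (tv e).
Definition weight (s : state) (e : 'I_m) : R := ((prd s (tv e))%:R)^-1.

Definition eligible (s : state) (e : 'I_m) : bool :=
  [&& e \in bdry_out s, ((height s e)%:Z < t%:Z - hpar)%R & wmin < weight s e].

Definition select (s : state) : option 'I_m :=
  [pick e | eligible s e &&
     [forall e', eligible s e' ==>
        (weight s e' < weight s e) ||
        ((weight s e' == weight s e) && (rk e <= rk e')%N)]].

Definition step (s : state) (e : 'I_m) : state :=
  let f := omega e in
  if f \notin bdry_in s then
    State (hv f |: tree s) (e |: matched s)
      (fun v => if v == hv f then (height s e).+1 else hgt s v)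
      (fun v => if v == hv f then (prd s (tv e) * dout (hv f))%N else prd s v)
  else State (tree s) (e |: matched s) (hgt s) (prd s).

Fixpoint run (fuel : nat) (s : state) : seq ('I_m * R) :=
  if fuel is k.+1 then
    match select s with
    | Some e => (e, weight s e) :: run k (step s e)
    | None => [::]
    end
  else [::].

(* each step pairs a new tail, so m+1 steps of fuel suffice for the
   exploration to stop by itself *)
Definition trace : seq ('I_m * R) := run m.+1 init.
Definition kappa : nat := size trace.
Definition wsel : seq R := map snd trace.

End Exploration.

(* Main.v *)
Require Import Defs.
From HB Require Import structures.
From mathcomp Require Import all_boot all_order all_algebra.
From mathcomp Require Import fingroup perm.
From mathcomp Require Import reals exp.
Import Order.TTheory GRing.Theory Num.Theory.
Local Open Scope ring_scope.
Set Implicit Arguments. Unset Strict Implicit. Unset Printing Implicit Defensive.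

From mathcomp Require Import lra.
Definition Inv (n m : nat) (tv : 'I_m -> 'I_n) (root : 'I_n) (s : state n m) : Prop :=
  [/\ root \in tree s, prd s root = dout tv root,
      (forall v, v \in tree s -> prd s root <= prd s v)%N,
      (forall e, e \in matched s -> tv e \in tree s) &
      exists p : 'I_n -> 'I_m,
        (forall v, v \in tree s -> v != root ->
           [/\ p v \in matched s, tv (p v) \in tree s &
               prd s v = (prd s (tv (p v)) * dout tv v)%N]) /\
        (forall v v', v \in tree s -> v != root -> v' \in tree s -> v' != root ->
           p v = p v' -> v = v')].

Lemma Inv_init (n m : nat) (tv : 'I_m -> 'I_n) (root : 'I_n) :
  (0 < m)%N -> Inv tv root (init tv root).
Proof.
move=> Hm; split => //=.
- by rewrite !inE.
- by move=> e; rewrite !inE.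
- exists (fun _ => Ordinal Hm); split.
  + by move=> v; rewrite !inE => /eqP ->; rewrite eqxx.
  + by move=> v v'; rewrite !inE => /eqP ->; rewrite eqxx.
Qed.

Lemma Inv_step (n m : nat) (tv hv : 'I_m -> 'I_n) (omega : {perm 'I_m})
  (root : 'I_n) (s : state n m) (e : 'I_m) :
  (forall i, 2 <= dout tv i)%N -> Inv tv root s -> e \in bdry_out tv s ->
  Inv tv root (step tv hv omega s e).
Proof.
move=> Hd [Hr Hpr Hge Hmt [p [Hp Hinj]]].
rewrite /bdry_out inE => /andP [Hem Het].
rewrite /step; case: ifP => Hf.
- have Hx : hv (omega e) \notin tree s.
    move: Hf; rewrite /bdry_in inE negb_and negbK => /orP [/imsetP [e' He' Heq]|//].
    by move: Hem; rewrite (perm_inj Heq) He'.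
  have Hrx : (root == hv (omega e)) = false.
    by apply/negbTE; apply: contraNneq Hx => <-.
  have Hnt : forall v, v \in tree s -> (v == hv (omega e)) = false.
    by move=> v Hv; apply/negbTE; apply: contraNneq Hx => <-.
  split => /=.
  + by rewrite !inE Hr orbT.
  + by rewrite Hrx.
  + move=> v; rewrite !inE Hrx => /orP [/eqP ->|Hv].
      rewrite eqxx /height; apply: leq_trans (Hge _ Het) _.
      by rewrite leq_pmulr // (leq_trans _ (Hd _)).
    by rewrite Hnt // Hge.
  + move=> e'; rewrite !inE => /orP [/eqP ->|He']; first by rewrite Het orbT.
    by rewrite Hmt ?orbT.
  + exists (fun v => if v == hv (omega e) then e else p v); split.
    * move=> v; rewrite !inE => /orP [/eqP ->|Hv] Hvr.
        by rewrite !eqxx Het orbT (Hnt _ Het).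
      have [H1 H2 H3] := Hp v Hv Hvr.
      by rewrite (Hnt _ Hv) H1 H2 !orbT (Hnt _ H2).
    * move=> v v'; rewrite !inE => /orP [/eqP ->|Hv] Hvr /orP [/eqP ->|Hv'] Hvr' //=.
      - rewrite eqxx Hnt // => Heq; have [H1 _ _] := Hp v' Hv' Hvr'.
        by move: Hem; rewrite Heq H1.
      - rewrite eqxx Hnt // => Heq; have [H1 _ _] := Hp v Hv Hvr.
        by move: Hem; rewrite -Heq H1.
      - by rewrite !Hnt //; apply: Hinj.
- split => //=.
  + move=> e'; rewrite !inE => /orP [/eqP ->|He']; first by [].
    by rewrite Hmt.
  + exists p; split; last by [].
    move=> v Hv Hvr; have [H1 H2 H3] := Hp v Hv Hvr.
    by rewrite !inE H1 orbT.
Qed.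

Lemma sum_tails (R : realType) (n m : nat) (tv : 'I_m -> 'I_n) (V : {set 'I_n})
  (F : 'I_n -> R) :
  \sum_(e in [set e | tv e \in V]) F (tv e) = \sum_(v in V) F v *+ dout tv v.
Proof.
rewrite (partition_big tv (fun v => v \in V)); last by move=> e; rewrite inE.
apply: eq_bigr => v Hv.
rewrite -sumr_const; apply: eq_big.
  by move=> e; rewrite !inE; case: (tv e =P v) => [->|_]; rewrite ?eqxx ?andbT ?andbF.
by move=> e /andP [_ /eqP ->].
Qed.

Lemma count_bound (R : realType) (n m : nat) (tv : 'I_m -> 'I_n) (root : 'I_n)
  (s : state n m) (w : R) :
  (forall i, 2 <= dout tv i)%N -> Inv tv root s -> 0 < w ->
  w <= ((prd s root)%:R)^-1 ->
  w * (#|[set e | (tv e \in tree s) && (w <= weight R tv s e)]|%:R + 2) <= 2.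
Proof.
move=> Hd [Hr Hpr Hge Hmt [p [Hp Hinj]]] w0 wr.
set om := fun v : 'I_n => ((prd s v)%:R : R)^-1.
set V := [set v | (v \in tree s) && (w <= om v)].
have HA : [set e | (tv e \in tree s) && (w <= weight R tv s e)] = [set e | tv e \in V].
  by apply/setP => e; rewrite !inE.
have Hpos : forall v, v \in tree s -> (0 < prd s v)%N.
  move=> v Hv; apply: leq_trans (Hge _ Hv); rewrite Hpr.
  by apply: leq_trans (Hd root).
have HrV : root \in V by rewrite !inE Hr.
set d := fun v : 'I_n => ((dout tv v)%:R : R).
have Hd2 : forall v, 2 <= d v by move=> v; rewrite /d (ler_nat R 2); exact: Hd.
have HT : (#|[set e | tv e \in V]|%:R : R) = \sum_(v in V) d v.
  rewrite -sum1_card natr_sum.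
  apply: eq_trans (@sum_tails R n m tv V (fun _ => 1)) _.
  apply: eq_bigr => v _; by rewrite /d -mulr_natl mulr1.
rewrite HA HT.
have Himg : \sum_(v in V :\ root) (om (tv (p v)) - w) <=
            \sum_(e in [set e | tv e \in V]) (om (tv e) - w).
  have Hinj' : {in V :\ root &, injective p}.
    move=> v v'; rewrite !inE => /and3P [Hvr Hv _] /and3P [Hvr' Hv' _].
    exact: Hinj.
  rewrite -(big_imset (fun e => om (tv e) - w) Hinj').
  rewrite [X in _ <= X](big_setID [set p x | x in V :\ root]).
  have -> : [set e | tv e \in V] :&: [set p x | x in V :\ root] =
            [set p x | x in V :\ root].
    apply/setIidPr/subsetP => e /imsetP [v Hv ->].
    move: Hv; rewrite !inE => /and3P [Hvr Hv Hw].
    have [_ H2 H3] := Hp v Hv Hvr.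
    rewrite H2 /=; apply: le_trans Hw _.
    rewrite /om H3 natrM invfM ler_piMr //.
    - by rewrite invr_ge0.
    - rewrite invf_le1; first by rewrite ler1n (leq_trans _ (Hd v)).
      by rewrite ltr0n (leq_trans _ (Hd v)).
  rewrite lerDl; apply: sumr_ge0 => e; rewrite !inE => /andP [_ /andP [_ He]].
  by rewrite subr_ge0.
have Hpv : forall v, v \in V :\ root -> om (tv (p v)) = d v * om v.
  move=> v; rewrite !inE => /and3P [Hvr Hv _].
  have [_ H2 H3] := Hp v Hv Hvr.
  rewrite /om /d H3 natrM invfM mulrCA mulfV ?mulr1 //.
  by rewrite pnatr_eq0 -lt0n (leq_trans _ (Hd v)).
rewrite (eq_bigr (fun v => d v * om v - w)) in Himg; last first.
  by move=> v Hv; rewrite Hpv.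
rewrite (@sum_tails R n m tv V (fun v => om v - w)) in Himg.
rewrite (big_setD1 root HrV) /= in Himg.
rewrite (big_setD1 root HrV) /=.
have Hr1 : d root * om root = 1.
  by rewrite /om /d Hpr mulfV // pnatr_eq0 -lt0n (leq_trans _ (Hd root)).
set X := \sum_(i in V :\ root) d i.
have H1 : \sum_(i in V :\ root) (om i - w) *+ dout tv i =
          \sum_(i in V :\ root) (d i * om i) - w * X.
  rewrite /X mulr_sumr -sumrB; apply: eq_bigr => v _.
  by rewrite -mulr_natr /d; lra.
have H2 : \sum_(i in V :\ root) (d i * om i - w) =
          \sum_(i in V :\ root) (d i * om i) - \sum_(i in V :\ root) w.
  by rewrite sumrB.
have H3 : \sum_(i in V :\ root) w <= w / 2 * X.
  rewrite /X mulr_sumr; apply: ler_sum => v _.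
  by have := Hd2 v; nra.
have H4 : (om root - w) *+ dout tv root = 1 - w * d root.
  by rewrite -mulr_natr -/(d root); rewrite mulrBl mulrC Hr1 mulrC.
rewrite H1 H2 H4 in Himg.
have := Hd2 root.
nra.
Qed.

Lemma select_spec (R : realType) (n m : nat) (tv hv : 'I_m -> 'I_n)
  (rk : {perm 'I_m}) (t : nat) (s : state n m) (e : 'I_m) :
  select R tv hv rk t s = Some e ->
  eligible R tv hv t s e /\
  forall e', eligible R tv hv t s e' -> weight R tv s e' <= weight R tv s e.
Proof.
rewrite /select; case: pickP => // x /andP [Hx /forallP H] [<-]; split => // e' He'.
move/implyP: (H e') => /(_ He') /orP [/ltW //|/andP [/eqP -> _] //].
Qed.

Lemma step_facts (n m : nat) (tv hv : 'I_m -> 'I_n) (omega : {perm 'I_m})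
  (s : state n m) (e : 'I_m) :
  e \in bdry_out tv s ->
  [/\ matched (step tv hv omega s e) = e |: matched s,
      forall x, x \in tree s -> [/\ x \in tree (step tv hv omega s e),
         prd (step tv hv omega s e) x = prd s x &
         hgt (step tv hv omega s e) x = hgt s x] &
      forall x, x \in tree (step tv hv omega s e) -> x \notin tree s ->
         prd (step tv hv omega s e) x = (prd s (tv e) * dout tv x)%N].
Proof.
rewrite /bdry_out inE => /andP [Hem Het].
rewrite /step; case: ifP => Hf /=.
- have Hx : hv (omega e) \notin tree s.
    move: Hf; rewrite /bdry_in inE negb_and negbK => /orP [/imsetP [e' He' Heq]|//].
    by move: Hem; rewrite (perm_inj Heq) He'.
  have Hnt : forall v, v \in tree s -> (v == hv (omega e)) = false.
    by move=> v Hv; apply/negbTE; apply: contraNneq Hx => <-.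
  split => //.
  + by move=> x Hxt; rewrite !inE Hxt orbT (Hnt _ Hxt).
  + move=> x; rewrite !inE => /orP [/eqP ->|-> //]; by rewrite eqxx.
- split => //.
  by move=> x ->.
Qed.

Lemma prd_pos (n m : nat) (tv : 'I_m -> 'I_n) (root : 'I_n) (s : state n m) :
  (forall i, 2 <= dout tv i)%N -> Inv tv root s ->
  forall x, x \in tree s -> (0 < prd s x)%N.
Proof.
move=> Hd [Hr Hpr Hge _ _] x Hx; apply: leq_trans (Hge _ Hx).
by rewrite Hpr (leq_trans _ (Hd root)).
Qed.

Lemma run_bound (R : realType) (n m : nat) (tv hv : 'I_m -> 'I_n)
  (rk : {perm 'I_m}) (t : nat) (root : 'I_n) (omega : {perm 'I_m}) :
  (forall i, 2 <= dout tv i)%N ->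
  forall fuel s (wl : R), Inv tv root s ->
  (forall e, e \in matched s -> wl <= weight R tv s e) ->
  (forall e, eligible R tv hv t s e -> weight R tv s e <= wl) ->
  forall i, (i < size (run R tv hv rk t omega fuel s))%N ->
  wmin R n < nth 0 (map snd (run R tv hv rk t omega fuel s)) i /\
  nth 0 (map snd (run R tv hv rk t omega fuel s)) i <=
    2 / ((#|matched s| + i).+1%:R + 2).
Proof.
move=> Hd; elim=> [|k IH] s wl Hinv Hm Hel i //=.
case Hs: (select R tv hv rk t s) => [e|] //=.
have [Hele Hmax] := select_spec Hs.
have /and3P [Hbo _ Hwm] := Hele.
have Hbo' := Hbo; move: Hbo'; rewrite /bdry_out inE => /andP [Hem Het].
have [Hmt Hold Hnew] := step_facts hv omega Hbo.
case: i => [|i] /= Hi.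
  split => //.
  set w := weight R tv s e.
  have Hw0 : 0 < w by rewrite /w /weight invr_gt0 ltr0n (prd_pos Hd Hinv).
  have Hwr : w <= ((prd s root)%:R)^-1.
    have [Hr _ Hge _ _] := Hinv.
    rewrite /w /weight lef_pV2 ?ler_nat ?Hge // posrE ltr0n (prd_pos Hd Hinv) //.
  have HC := count_bound Hd Hinv Hw0 Hwr.
  set T := #|_| in HC.
  have HT : ((#|matched s| + 0).+1 <= T)%N.
    rewrite addn0 (_ : (#|matched s|.+1 = #|e |: matched s|)%N); last by rewrite cardsU1 Hem.
    apply: subset_leq_card; apply/subsetP => x; rewrite !inE.
    case/orP => [/eqP -> |Hx]; first by rewrite Het /= le_refl.
    have [_ _ _ Hmt' _] := Hinv.
    rewrite Hmt' //=; apply: le_trans (Hm _ Hx); exact: Hel.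
  rewrite ler_pdivlMr; last by rewrite ltr_wpDl.
  apply: le_trans HC; rewrite ler_pM2l // lerD2r ler_nat //.
have Hinv' := Inv_step hv omega Hd Hinv Hbo.
have := IH (step tv hv omega s e) (weight R tv s e) Hinv' _ _ i Hi.
rewrite Hmt cardsU1 Hem add1n addSnnS; apply.
- move=> x; rewrite !inE => /orP [/eqP ->|Hx].
    have [_ Hp _] := Hold _ Het; by rewrite /weight Hp.
  have [_ _ _ Hmt' _] := Hinv.
  have [_ Hp _] := Hold _ (Hmt' _ Hx).
  have -> : weight R tv (step tv hv omega s e) x = weight R tv s x by rewrite /weight Hp.
  apply: le_trans (Hm _ Hx); exact: Hel.
- move=> x Hx; have /and3P [Hb Hh Hwx] := Hx.
  move: Hb; rewrite /bdry_out inE Hmt !inE negb_or => /andP [/andP [_ Hnm] Htv].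
  have [Hin|Hnin] := boolP (tv x \in tree s).
    have [_ Hp Hh'] := Hold _ Hin.
    have -> : weight R tv (step tv hv omega s e) x = weight R tv s x by rewrite /weight Hp.
    apply: Hmax; apply/and3P; split.
    + by rewrite /bdry_out inE Hnm Hin.
    + by move: Hh; rewrite /height Hh'.
    + by move: Hwx; rewrite /weight Hp.
  rewrite /weight Hnew // lef_pV2 ?posrE ?ltr0n ?muln_gt0 ?(prd_pos Hd Hinv) //.
  + by rewrite ler_nat leq_pmulr // (leq_trans _ (Hd _)).
  + by rewrite (leq_trans _ (Hd _)).
Qed.
Unset Implicit Arguments.

Theorem lemma3 (R : realType) (n m : nat) (tv hv : 'I_m -> 'I_n)
  (rk : {perm 'I_m}) (t : nat) (root : 'I_n) (omega : {perm 'I_m}) :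
  (forall i : 'I_n, (2 <= dout tv i)%N) ->
  (forall i : 'I_n, (2 <= din hv i)%N) ->
  (0 < t)%N ->
  (forall k : nat, (1 <= k <= kappa R tv hv rk t root omega)%N ->
     nth 0 (wsel R tv hv rk t root omega) k.-1 <= 2 / (k%:R + 2)) /\
  (kappa R tv hv rk t root omega)%:R * ln (n%:R : R) <= 2 * n%:R.
Proof.
move=> Hd _ _.
have Hm : (0 < m)%N.
  apply: (@leq_trans (dout tv root)); first exact: leq_trans _ (Hd root).
  rewrite /dout; apply: leq_trans (max_card _) _; by rewrite card_ord.
have Hn : (0 < n)%N by case: n root {tv hv Hd} => [[]|].
have HB := @run_bound R n m tv hv rk t root omega Hd m.+1 (init tv root) 1 (Inv_init tv root Hm).
have {HB} HB : forall i, (i < kappa R tv hv rk t root omega)%N ->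
    wmin R n < nth 0 (wsel R tv hv rk t root omega) i /\
    nth 0 (wsel R tv hv rk t root omega) i <= 2 / (i.+1%:R + 2).
  move=> i Hi; have := HB _ _ i Hi; rewrite /= cards0 add0n; apply.
  - by move=> e; rewrite inE.
  - move=> e _; rewrite /weight /= invf_le1 ?ler1n ?ltr0n ?(leq_trans _ (Hd root)) //.
split.
  move=> k /andP [Hk1 Hk2].
  have Hk : (k.-1 < kappa R tv hv rk t root omega)%N by case: k Hk1 Hk2.
  have [_ H] := HB k.-1 Hk; by rewrite prednK in H.
set K := kappa R tv hv rk t root omega.
case HK: K => [|k]; first by rewrite mul0r mulr_ge0 ?ler0n.
have [H1 H2] : wmin R n < nth 0 (wsel R tv hv rk t root omega) k /\
    nth 0 (wsel R tv hv rk t root omega) k <= 2 / (k.+1%:R + 2).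
  by apply: HB; rewrite -/K HK.
rewrite -HK.
set x := nth 0 _ k in H1 H2.
have HN : 0 < (n%:R : R) by rewrite ltr0n.
have HL : 0 <= ln (n%:R : R) by apply: ln_ge0; rewrite ler1n.
move: H1; rewrite /wmin ltr_pdivrMr // => H1.
have Hk : (k.+1%:R : R) = K%:R by rewrite HK.
rewrite Hk in H2.
have HK0 : 0 <= (K%:R : R) by [].
set y := 2 / _ in H2.
have Hy : y * (K%:R + 2) = 2 by rewrite /y mulfVK // gt_eqF // ltr_wpDl.
have H3 : ln (n%:R : R) <= y * n%:R.
  apply: le_trans (ltW H1) _; by rewrite ler_pM2r.
have H4 : (K%:R + 2) * ln (n%:R : R) <= (K%:R + 2) * (y * n%:R).
  by rewrite ler_pM2l // ltr_wpDl.
rewrite mulrA (mulrC _ y) Hy in H4.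
nra.
Qed.
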